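(* Let $\Lambda$ be an artin algebra, $n\ge2$, and let $f\colon X\to Y$ be an irreducible morphism in $\mathbf{C_n}({\rm proj}\,\Lambda)$ with $X$ or $Y$ indecomposable. (a) If $f$ is of type (ret), then ${\rm Ker}\,f$ is a non-zero indecomposable complex belonging to $\mathbf{C_n}({\rm proj}\,\Lambda)$. (b) If $f$ is of type (sec), then ${\rm Coker}\,f$ is an indecomposable complex belonging to $\mathbf{C_n}({\rm proj}\,\Lambda)$.
   Context: For an artin algebra $\Lambda$ and $n\ge 2$, $\mathbf{C_n}({\rm proj}\,\Lambda)$ is the full subcategory of the category of complexes of finitely generated right $\Lambda$-modules consisting of complexes $X=(X^i,d^i_X)$ with $X^i$ projective for all $i$ and $X^i=0$ for $i\notin\{1,\dots,n\}$; morphisms are chain maps. Kernels and cokernels are computed degreewise with induced differentials. A morphism in $\mathbf{C_n}({\rm proj}\,\Lambda)$ is irreducible if it is neither a section nor a retraction, and whenever $f=gh$ then $h$ is a section or $g$ is a retraction. An irreducible $f=\{f^i\}$ is of type (sec) if every $f^i$ is a section in ${\rm proj}\,\Lambda$, and of type (ret) if every $f^i$ is a retraction in ${\rm proj}\,\Lambda$. *)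

(* Defs.v *)
(* Right Lambda-modules are modelled as left modules over the
   converse ring Lambda^c, i.e. as [lmodType Lambda^c]. *)
From HB Require Import structures.
From mathcomp Require Import all_boot all_order all_algebra.
Set Implicit Arguments. Unset Strict Implicit. Unset Printing Implicit Defensive.
Import Order.TTheory GRing.Theory Num.Theory.
Local Open Scope ring_scope.

Definition is_ideal (K : comNzRingType) (I : K -> Prop) : Prop :=
  I 0 /\ (forall x y, I x -> I y -> I (x + y)) /\ (forall a x, I x -> I (a * x)).

Definition artinian_ring (K : comNzRingType) : Prop :=
  forall I : nat -> K -> Prop, (forall k, is_ideal (I k)) ->
    (forall k x, I k.+1 x -> I k x) ->
    exists N, forall k, (N <= k)%N -> forall x, I k x <-> I N x.

Definition artin_algebra (L : nzRingType) : Prop :=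
  exists (K : comNzRingType) (phi : {rmorphism K -> L}),
    [/\ artinian_ring K,
        (forall a x, phi a * x = x * phi a) &
        exists s : seq L, forall x : L,
          exists c : 'I_(size s) -> K, x = \sum_(i < size s) phi (c i) * s`_i].

Definition lin (L : nzRingType) (M N : lmodType L^c) (g : M -> N) : Prop :=
  forall (a : L^c) (x y : M), g (a *: x + y) = a *: g x + g y.

Definition fin_gen (L : nzRingType) (M : lmodType L^c) : Prop :=
  exists s : seq M, forall x : M,
    exists c : 'I_(size s) -> L^c, x = \sum_(i < size s) c i *: s`_i.

Definition projective_mod (L : nzRingType) (P : lmodType L^c) : Prop :=
  forall (M N : lmodType L^c) (g : M -> N) (h : P -> N),
    lin g -> lin h -> (forall y, exists x, g x = y) ->
    exists h' : P -> M, lin h' /\ forall p, g (h' p) = h p.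

Unset Implicit Arguments.
Record cplx (L : nzRingType) := Cplx {
  cobj : int -> lmodType L^c;
  cd : forall i : int, cobj i -> cobj (i + 1);
  cd_lin : forall i, lin (cd i);
  cd_cd : forall i x, cd (i + 1) (cd i x) = 0 }.

Arguments cobj {L} c i.
Arguments cd {L} c i _.
Arguments cd_lin {L} c i.
Arguments cd_cd {L} c i x.

Record chain_map (L : nzRingType) (X Y : cplx L) := ChainMap {
  cm :> forall i : int, cobj X i -> cobj Y i;
  cm_lin : forall i, lin (cm i);
  cm_comm : forall i x, cm (i + 1) (cd X i x) = cd Y i (cm i x) }.

Arguments chain_map {L} X Y.
Arguments ChainMap {L X Y} cm cm_lin cm_comm.
Arguments cm {L X Y} c i _.
Arguments cm_lin {L X Y} c i.
Arguments cm_comm {L X Y} c i x.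
Set Implicit Arguments.

Section Ops.
Variable L : nzRingType.

Definition cm_eq (X Y : cplx L) (f g : chain_map X Y) : Prop :=
  forall i x, f i x = g i x.

Definition cplx_zero (X : cplx L) : Prop := forall i (x : cobj X i), x = 0.

Definition in_Cn (n : nat) (X : cplx L) : Prop :=
  (forall i, fin_gen (cobj X i) /\ projective_mod (cobj X i)) /\
  (forall i : int, (i <= 0) || (n%:Z < i) -> forall x : cobj X i, x = 0).

Definition is_section (X Y : cplx L) (h : chain_map X Y) : Prop :=
  exists r : chain_map Y X, forall i x, r i (h i x) = x.

Definition is_retraction (X Y : cplx L) (g : chain_map X Y) : Prop :=
  exists s : chain_map Y X, forall i y, g i (s i y) = y.

Definition irreducible (n : nat) (X Y : cplx L) (f : chain_map X Y) : Prop :=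
  ~ is_section f /\ ~ is_retraction f /\
  forall (Z : cplx L) (h : chain_map X Z) (g : chain_map Z Y),
    in_Cn n Z -> (forall i x, f i x = g i (h i x)) ->
    is_section h \/ is_retraction g.

Definition type_sec (X Y : cplx L) (f : chain_map X Y) : Prop :=
  forall i, exists r : cobj Y i -> cobj X i, lin r /\ forall x, r (f i x) = x.

Definition type_ret (X Y : cplx L) (f : chain_map X Y) : Prop :=
  forall i, exists s : cobj Y i -> cobj X i, lin s /\ forall y, f i (s y) = y.

Definition indecomposable (X : cplx L) : Prop :=
  ~ cplx_zero X /\
  forall (X1 X2 : cplx L) (i1 : chain_map X1 X) (i2 : chain_map X2 X)
         (p1 : chain_map X X1) (p2 : chain_map X X2),
    (forall k x, p1 k (i1 k x) = x) -> (forall k x, p2 k (i2 k x) = x) ->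
    (forall k x, p2 k (i1 k x) = 0) -> (forall k x, p1 k (i2 k x) = 0) ->
    (forall k x, i1 k (p1 k x) + i2 k (p2 k x) = x) ->
    cplx_zero X1 \/ cplx_zero X2.

Definition is_kernel (X Y K : cplx L) (f : chain_map X Y) (iota : chain_map K X)
  : Prop :=
  forall i, injective (iota i) /\
    forall x, f i x = 0 <-> exists y, iota i y = x.

Definition is_cokernel (X Y C : cplx L) (f : chain_map X Y) (pi : chain_map Y C)
  : Prop :=
  forall i, (forall z, exists y, pi i y = z) /\
    forall y, pi i y = 0 <-> exists x, f i x = y.

End Ops.

(* Main.v *)
Require Import Defs.
From HB Require Import structures.
From mathcomp Require Import all_boot all_order all_algebra.
From Stdlib Require Import ClassicalEpsilon.
Set Implicit Arguments. Unset Strict Implicit. Unset Printing Implicit Defensive.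
Import Order.TTheory GRing.Theory Num.Theory.
Local Open Scope ring_scope.

Section Lin.
Lemma linD (L : nzRingType) (M N : lmodType L^c) (g : M -> N) : lin g ->
  forall x y, g (x + y) = g x + g y.
Proof. by move=> Hg x y; have := Hg 1 x y; rewrite !scale1r. Qed.
Lemma lin0 (L : nzRingType) (M N : lmodType L^c) (g : M -> N) : lin g -> g 0 = 0.
Proof. move=> Hg; apply: (@addrI _ (g 0)); by rewrite -linD // !addr0. Qed.
Lemma linZ (L : nzRingType) (M N : lmodType L^c) (g : M -> N) : lin g ->
  forall a x, g (a *: x) = a *: g x.
Proof. by move=> Hg a x; rewrite -[a *: x]addr0 Hg (lin0 Hg) addr0. Qed.
Lemma linN (L : nzRingType) (M N : lmodType L^c) (g : M -> N) : lin g ->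
  forall x, g (- x) = - g x.
Proof. by move=> Hg x; apply/eqP; rewrite -addr_eq0 -linD // addNr lin0. Qed.
Lemma linB (L : nzRingType) (M N : lmodType L^c) (g : M -> N) : lin g ->
  forall x y, g (x - y) = g x - g y.
Proof. by move=> Hg x y; rewrite linD // linN. Qed.
Lemma linP (L : nzRingType) (M N : lmodType L^c) (g : M -> N) :
  (forall x y, g (x + y) = g x + g y) -> (forall a x, g (a *: x) = a *: g x) -> lin g.
Proof. by move=> HD HZ a x y; rewrite HD HZ. Qed.
Lemma lin_comp (L : nzRingType) (M N P : lmodType L^c) (g : N -> P) (g' : M -> N) :
  lin g -> lin g' -> lin (fun x => g (g' x)).
Proof. by move=> H1 H2 a x y; rewrite H2 H1. Qed.
Lemma lin_sub (L : nzRingType) (M N : lmodType L^c) (g g' : M -> N) :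
  lin g -> lin g' -> lin (fun x => g x - g' x).
Proof. by move=> H1 H2 a x y; rewrite H1 H2 scalerBr opprD addrACA. Qed.
Lemma lin_add (L : nzRingType) (M N : lmodType L^c) (g g' : M -> N) :
  lin g -> lin g' -> lin (fun x => g x + g' x).
Proof. by move=> H1 H2 a x y; rewrite H1 H2 scalerDr addrACA. Qed.
End Lin.

Lemma sum_cast (V : nmodType) m n (E : m = n) (F : 'I_n -> V) :
  \sum_(i < m) F (cast_ord E i) = \sum_(i < n) F i.
Proof. by subst; apply: eq_bigr => i _; rewrite cast_ord_id. Qed.

Lemma fin_gen_retract (L : nzRingType) (M N : lmodType L^c) (q : M -> N) (e : N -> M) :
  lin q -> (forall y, q (e y) = y) -> fin_gen M -> fin_gen N.
Proof.
move=> Hq Hqe [s Hs]; exists (map q s) => y.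
have [c Hc] := Hs (e y).
exists (fun i => c (cast_ord (size_map q s) i)).
rewrite -{1}(Hqe y) Hc (big_morph q (linD Hq) (lin0 Hq)).
rewrite -(sum_cast (size_map q s)).
apply: eq_bigr => i _; rewrite (linZ Hq); congr (_ *: _).
case: i => [i Hi] /=; rewrite (nth_map 0) //; by rewrite size_map in Hi.
Qed.

Lemma proj_retract (L : nzRingType) (M N : lmodType L^c) (q : M -> N) (e : N -> M) :
  lin q -> lin e -> (forall y, q (e y) = y) -> projective_mod M -> projective_mod N.
Proof.
move=> Hq He Hqe HP A B g h Hg Hh Hs.
have [h' [Hh' Hc]] := HP A B g (fun x => h (q x)) Hg (lin_comp Hh Hq) Hs.
exists (fun p => h' (e p)); split; first exact: lin_comp.
by move=> p; rewrite Hc Hqe.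
Qed.

Lemma cmD (L : nzRingType) (X Y : cplx L) (f : chain_map X Y) i x y : f i (x + y) = f i x + f i y.
Proof. exact: (@linD _ _ _ _ (cm_lin f i) x y). Qed.
Lemma cmB (L : nzRingType) (X Y : cplx L) (f : chain_map X Y) i x y : f i (x - y) = f i x - f i y.
Proof. exact: (@linB _ _ _ _ (cm_lin f i) x y). Qed.
Lemma cm0 (L : nzRingType) (X Y : cplx L) (f : chain_map X Y) i : f i 0 = 0.
Proof. exact: (@lin0 _ _ _ _ (cm_lin f i)). Qed.
Lemma cdD (L : nzRingType) (X : cplx L) i x y : cd X i (x + y) = cd X i x + cd X i y.
Proof. exact: (@linD _ _ _ _ (cd_lin X i) x y). Qed.
Lemma cdB (L : nzRingType) (X : cplx L) i x y : cd X i (x - y) = cd X i x - cd X i y.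
Proof. exact: (@linB _ _ _ _ (cd_lin X i) x y). Qed.
Lemma cd0 (L : nzRingType) (X : cplx L) i : cd X i 0 = 0.
Proof. exact: (@lin0 _ _ _ _ (cd_lin X i)). Qed.

Lemma keyA (L : nzRingType) n (X Y K : cplx L) (f : chain_map X Y) (iota : chain_map K X)
  (e : chain_map K K) (s : forall i, cobj Y i -> cobj X i) (r : forall i, cobj X i -> cobj K i) :
  in_Cn n X -> irreducible n f ->
  (forall i, lin (s i)) -> (forall i, lin (r i)) ->
  (forall i y, f i (s i y) = y) ->
  (forall i k, f i (iota i k) = 0) ->
  (forall i k, r i (iota i k) = k) ->
  (forall i x, iota i (r i x) + s i (f i x) = x) ->
  (forall i k, e i (e i k) = e i k) ->
  (forall i k, e i k = 0) \/
  exists sg : forall i, cobj Y i -> cobj K i, (forall i, lin (sg i)) /\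
    forall i y, sg (i+1) (cd Y i y) =
       cd K i (sg i y) + r (i+1) (cd X i (s i y)) - e (i+1) (r (i+1) (cd X i (s i y))).
Proof.
move=> HX Hirr Hs Hr Hfs Hfi Hri Hdec He.
pose h := fun i y => r (i+1) (cd X i (s i y)).
have hlin : forall i, lin (h i) by move=> i; apply: lin_comp => //; apply: lin_comp => //; apply: cd_lin.
have rd : forall i x, r (i+1) (cd X i x) = cd K i (r i x) + h i (f i x).
  move=> i x; have -> : cd X i x = cd X i (iota i (r i x) + s i (f i x)) by rewrite Hdec.
  by rewrite cdD -cm_comm (linD (Hr _)) Hri.
have dh : forall i y, cd K (i+1) (h i y) + h (i+1) (cd Y i y) = 0.
  move=> i y; have := rd (i+1) (cd X i (s i y)).
  by rewrite cd_cd (lin0 (Hr _)) cm_comm Hfs => <-.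
pose d' := fun i x => cd X i x - iota (i+1) (e (i+1) (h i (f i x))).
have d'lin : forall i, lin (d' i).
  move=> i; apply: lin_sub; first exact: cd_lin.
  apply: lin_comp; first exact: cm_lin.
  apply: lin_comp; first exact: cm_lin.
  by apply: lin_comp; [exact: hlin | exact: cm_lin].
have d'd' : forall i x, d' (i+1) (d' i x) = 0.
  move=> i x; rewrite /d' cdB cd_cd sub0r cmB Hfi subr0 -(cm_comm iota) -(cm_comm e) (cm_comm f).
  by rewrite -opprD -cmD -cmD dh !cm0 oppr0.
pose Z := @Cplx L (cobj X) d' d'lin d'd'.
pose uf := fun i x => x - iota i (e i (r i x)).
have ulin : forall i, lin (uf i).
  move=> i; apply: lin_sub; first by move=> a x y.
  apply: lin_comp; first exact: cm_lin.
  by apply: lin_comp; [exact: cm_lin | exact: Hr].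
have ucomm : forall i x, uf (i+1) (cd X i x) = cd Z i (uf i x).
  move=> i x; rewrite /= /uf /d' rd cdB cmB Hfi subr0 -cm_comm -cm_comm.
  by rewrite !cmD opprD addrA.
pose u := @ChainMap L X Z uf ulin ucomm.
have gcomm : forall i x, f (i+1) (cd Z i x) = cd Y i (f i x).
  by move=> i x; rewrite /= /d' cmB Hfi subr0 cm_comm.
pose g := @ChainMap L Z Y (fun i x => f i x) (cm_lin f) gcomm.
have HZ : in_Cn n Z := HX.
have fact : forall i x, f i x = g i (u i x).
  by move=> i x; rewrite /= /uf cmB Hfi subr0.
case: (Hirr.2.2 Z u g HZ fact) => [[v Hv] | [t Ht]].
- left=> i k.
  have H0 : u i (iota i (e i k)) = 0 by rewrite /= /uf Hri He subrr.
  have H1 : iota i (e i k) = 0 by rewrite -(Hv i (iota i (e i k))) H0 cm0.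
  by rewrite -(Hri i (e i k)) H1 (lin0 (Hr _)).
- right; exists (fun i y => r i (t i y)); split.
    by move=> i; apply: lin_comp; [exact: Hr | exact: cm_lin].
  move=> i y; rewrite cm_comm /= /d' (linB (Hr _)) Hri rd.
  by have /= -> := Ht i y.
Qed.

Lemma zmod_aux (V : zmodType) (a b c : V) : b = a + b - c - a + c.
Proof. by rewrite (addrAC (a + b)) [a + b]addrC addrK subrK. Qed.

Lemma keyB (L : nzRingType) n (X Y C : cplx L) (f : chain_map X Y) (pi : chain_map Y C)
  (e : chain_map C C) (t : forall i, cobj C i -> cobj Y i) (rho : forall i, cobj Y i -> cobj X i) :
  in_Cn n Y -> irreducible n f ->
  (forall i, lin (t i)) -> (forall i, lin (rho i)) ->
  (forall i c, pi i (t i c) = c) ->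
  (forall i x, pi i (f i x) = 0) ->
  (forall i x, rho i (f i x) = x) ->
  (forall i y, f i (rho i y) + t i (pi i y) = y) ->
  (forall i c, e i (e i c) = e i c) ->
  (forall i c, e i c = 0) \/
  exists ph : forall i, cobj C i -> cobj X i, (forall i, lin (ph i)) /\
    forall i c, ph (i+1) (cd C i c) =
       cd X i (ph i c) - rho (i+1) (cd Y i (t i c)) + rho (i+1) (cd Y i (t i (e i c))).
Proof.
move=> HY Hirr Ht Hrho Hpt Hpf Hrf Hdec He.
pose k := fun i c => rho (i+1) (cd Y i (t i c)).
have klin : forall i, lin (k i).
  by move=> i; apply: lin_comp => //; apply: lin_comp => //; apply: cd_lin.
have rhod : forall i y, rho (i+1) (cd Y i y) = cd X i (rho i y) + k i (pi i y).
  move=> i y; have -> : cd Y i y = cd Y i (f i (rho i y) + t i (pi i y)) by rewrite Hdec.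
  by rewrite cdD -cm_comm (linD (Hrho _)) Hrf.
have dk : forall i c, cd X (i+1) (k i c) + k (i+1) (cd C i c) = 0.
  move=> i c; have := rhod (i+1) (cd Y i (t i c)).
  by rewrite cd_cd (lin0 (Hrho _)) (cm_comm pi) Hpt => <-.
have dt : forall i c, cd Y i (t i c) = f (i+1) (k i c) + t (i+1) (cd C i c).
  move=> i c; rewrite -{1}(Hdec (i+1) (cd Y i (t i c))) (cm_comm pi) Hpt //.
pose d' := fun i y => cd Y i y - f (i+1) (k i (e i (pi i y))).
have d'lin : forall i, lin (d' i).
  move=> i; apply: lin_sub; first exact: cd_lin.
  apply: lin_comp; first exact: cm_lin.
  apply: lin_comp; first exact: klin.
  by apply: lin_comp; exact: cm_lin.
have d'd' : forall i y, d' (i+1) (d' i y) = 0.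
  move=> i y; rewrite /d' cdB cd_cd sub0r cmB Hpf subr0 -(cm_comm f) (cm_comm pi) (cm_comm e).
  by rewrite -opprD -cmD dk cm0 oppr0.
pose Z := @Cplx L (cobj Y) d' d'lin d'd'.
have ucomm : forall i x, f (i+1) (cd X i x) = cd Z i (f i x).
  by move=> i x; rewrite /= /d' Hpf cm0 (lin0 (klin _)) cm0 subr0 cm_comm.
pose u := @ChainMap L X Z (fun i x => f i x) (cm_lin f) ucomm.
pose gf := fun i y => y - t i (e i (pi i y)).
have glin : forall i, lin (gf i).
  move=> i; apply: lin_sub; first by move=> a x y.
  apply: lin_comp; first exact: Ht.
  by apply: lin_comp; exact: cm_lin.
have gcomm : forall i y, gf (i+1) (cd Z i y) = cd Y i (gf i y).
  move=> i y; rewrite /= /gf /d' cdB dt cmB Hpf subr0 (cm_comm pi) (cm_comm e).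
  by rewrite opprD addrA.
pose g := @ChainMap L Z Y gf glin gcomm.
have HZ : in_Cn n Z := HY.
have fact : forall i x, f i x = g i (u i x).
  by move=> i x; rewrite /= /gf Hpf cm0 (lin0 (Ht _)) subr0.
case: (Hirr.2.2 Z u g HZ fact) => [[v Hv] | [t' Ht']].
- right; exists (fun i c => v i (t i c)); split.
    by move=> i a x y; rewrite (Ht i) (cm_lin v i).
  move=> i c; have H := cm_comm v i (t i c).
  rewrite /= /d' dt Hpt cmB cmD !Hv in H.
  rewrite -H; exact: zmod_aux.
- left=> i c.
  have := congr1 (pi i) (Ht' i (t i c)); rewrite /= /gf cmB !Hpt => <-.
  by rewrite cmB He subrr.
Qed.

Lemma cmc_comm (L : nzRingType) (X Y Z : cplx L) (g : chain_map Y Z) (h : chain_map X Y) :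
  forall i x, g (i+1) (h (i+1) (cd X i x)) = cd Z i (g i (h i x)).
Proof. by move=> i x; rewrite !cm_comm. Qed.
Definition cmc (L : nzRingType) (X Y Z : cplx L) (g : chain_map Y Z) (h : chain_map X Y)
  : chain_map X Z :=
  ChainMap (fun i x => g i (h i x)) (fun i => lin_comp (cm_lin g i) (cm_lin h i)) (cmc_comm g h).

Lemma partA (L : nzRingType) n (X Y : cplx L) (f : chain_map X Y)
  (HX : in_Cn n X) (Hirr : irreducible n f) :
  type_ret f ->
     forall (K : cplx L) (iota : chain_map K X), is_kernel f iota ->
       ~ cplx_zero K /\ indecomposable K /\ in_Cn n K.
Proof.
move=> Hret K iota Hker.
have [s Hs] : exists s : forall i, cobj Y i -> cobj X i,
    forall i, lin (s i) /\ forall y, f i (s i y) = y.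
  by exists (fun i => proj1_sig (constructive_indefinite_description _ (Hret i)));
    move=> i; exact: (proj2_sig (constructive_indefinite_description _ (Hret i))).
have Hslin i : lin (s i) := (Hs i).1.
have Hfs i y : f i (s i y) = y := (Hs i).2 y.
have Hfi i k : f i (iota i k) = 0 by apply/((Hker i).2); exists k.
have Hinj i : injective (iota i) := (Hker i).1.
have pre i x : f i (x - s i (f i x)) = 0 by rewrite cmB Hfs subrr.
have [r Hr] : exists r : forall i, cobj X i -> cobj K i,
    forall i x, iota i (r i x) = x - s i (f i x).
  exists (fun i x => proj1_sig (constructive_indefinite_description _
            (proj1 ((Hker i).2 _) (pre i x)))).
  by move=> i x; exact: (proj2_sig (constructive_indefinite_description _
            (proj1 ((Hker i).2 _) (pre i x)))).
have Hrlin i : lin (r i).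
  move=> a x y; apply: (Hinj i); rewrite Hr cmD !(cm_lin iota i) !Hr.
  by rewrite (linD (Hslin i)) (linZ (cm_lin f i)) (linZ (Hslin i)) scalerBr opprD addrACA.
have Hri i k : r i (iota i k) = k by apply: (Hinj i); rewrite Hr Hfi (lin0 (Hslin i)) subr0.
have Hdec i x : iota i (r i x) + s i (f i x) = x by rewrite Hr subrK.
have Kin : in_Cn n K.
  split.
    move=> i; split.
      exact: (fin_gen_retract (Hrlin i) (Hri i) (HX.1 i).1).
    exact: (proj_retract (Hrlin i) (cm_lin iota i) (Hri i) (HX.1 i).2).
  move=> i Hi k; by rewrite -(Hri i k) (HX.2 i Hi (iota i k)) (lin0 (Hrlin i)).
have Knz : ~ cplx_zero K.
  move=> Kz; apply: Hirr.1.
  have Scomm : forall i y, s (i+1) (cd Y i y) = cd X i (s i y).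
    move=> i y; rewrite -{1}(Hdec (i+1) (cd X i (s i y))) (Kz _ (r _ _)) cm0 add0r.
    by rewrite cm_comm Hfs.
  exists (ChainMap s Hslin Scomm) => i x /=.
  by rewrite -{2}(Hdec i x) (Kz _ (r i x)) cm0 add0r.
split=> //; split=> //; split=> //.
move=> K1 K2 i1 i2 p1 p2 H11 H22 H21 H12 Hsum.
have E1 i k : (cmc i1 p1) i ((cmc i1 p1) i k) = (cmc i1 p1) i k by rewrite /= H11.
have E2 i k : (cmc i2 p2) i ((cmc i2 p2) i k) = (cmc i2 p2) i k by rewrite /= H22.
case: (keyA HX Hirr Hslin Hrlin Hfs Hfi Hri Hdec E1) => [Z1 | [sg1 [sg1lin Hsg1]]].
  left=> j x; have := Z1 j (i1 j x); rewrite /= H11 => H0.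
  by rewrite -(H11 j x) H0 cm0.
case: (keyA HX Hirr Hslin Hrlin Hfs Hfi Hri Hdec E2) => [Z2 | [sg2 [sg2lin Hsg2]]].
  right=> j x; have := Z2 j (i2 j x); rewrite /= H22 => H0.
  by rewrite -(H22 j x) H0 cm0.
exfalso; apply: Hirr.2.1.
pose sg := fun i y => i2 i (p2 i (sg1 i y)) + i1 i (p1 i (sg2 i y)).
have sglin i : lin (sg i).
  apply: lin_add; apply: lin_comp; try exact: cm_lin;
    (apply: lin_comp; [exact: cm_lin | first [exact: sg1lin | exact: sg2lin]]).
have Hsg i y : sg (i+1) (cd Y i y) = cd K i (sg i y) + r (i+1) (cd X i (s i y)).
  rewrite /sg Hsg1 Hsg2 /= !cmB !cmD H21 H12 !cm0 !subr0.
  rewrite cdD -!(cm_comm i2) -!(cm_comm p2) -!(cm_comm i1) -!(cm_comm p1).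
  rewrite -[in RHS](Hsum _ (r (i+1) (cd X i (s i y)))).
  by rewrite addrACA; congr (_ + _); rewrite addrC.
pose s' := fun i y => s i y + iota i (sg i y).
have s'lin i : lin (s' i).
  apply: lin_add => //; apply: lin_comp => //; exact: cm_lin.
have s'comm i y : s' (i+1) (cd Y i y) = cd X i (s' i y).
  rewrite /s' Hsg cmD cdD -(cm_comm iota).
  rewrite -[in RHS](Hdec (i+1) (cd X i (s i y))) (cm_comm f) Hfs.
  by rewrite [iota _ (cd K _ _) + _]addrC addrA; congr (_ + _); rewrite addrC.
exists (ChainMap s' s'lin s'comm) => i y /=.
by rewrite /s' cmD Hfs Hfi addr0.
Qed.

Lemma partB (L : nzRingType) n (X Y : cplx L) (f : chain_map X Y)
  (HY : in_Cn n Y) (Hirr : irreducible n f) :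
  type_sec f ->
     forall (C : cplx L) (pi : chain_map Y C), is_cokernel f pi ->
       indecomposable C /\ in_Cn n C.
Proof.
move=> Hsec C pi Hcok.
have [r0 Hr0] : exists r0 : forall i, cobj Y i -> cobj X i,
    forall i, lin (r0 i) /\ forall x, r0 i (f i x) = x.
  by exists (fun i => proj1_sig (constructive_indefinite_description _ (Hsec i)));
    move=> i; exact: (proj2_sig (constructive_indefinite_description _ (Hsec i))).
have Hr0lin i : lin (r0 i) := (Hr0 i).1.
have Hr0f i x : r0 i (f i x) = x := (Hr0 i).2 x.
have Hpf i x : pi i (f i x) = 0 by apply/((Hcok i).2); exists x.
have [pre Hpre] : exists pre : forall i, cobj C i -> cobj Y i, forall i c, pi i (pre i c) = c.
  exists (fun i c => proj1_sig (constructive_indefinite_description _ ((Hcok i).1 c))).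
  by move=> i c; exact: (proj2_sig (constructive_indefinite_description _ ((Hcok i).1 c))).
pose T := fun i y => y - f i (r0 i y).
have Tlin i : lin (T i).
  apply: lin_sub; first by move=> a x y.
  apply: lin_comp; [exact: cm_lin | exact: Hr0lin].
have TP i y y' : pi i y = pi i y' -> T i y = T i y'.
  move=> E; have : pi i (y - y') = 0 by rewrite cmB E subrr.
  move/((Hcok i).2) => [x Hx]; apply/eqP; rewrite -subr_eq0 -(linB (Tlin i)) -Hx.
  by rewrite /T Hr0f subrr.
pose t := fun i c => T i (pre i c).
have Hpt i c : pi i (t i c) = c by rewrite /t /T cmB Hpf subr0 Hpre.
have tlin i : lin (t i).
  move=> a c c'; rewrite /t -(Tlin i); apply: TP.
  by rewrite (cm_lin pi i) !Hpre.
pose rho := fun i y => r0 i (y - t i (pi i y)).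
have rholin i : lin (rho i).
  apply: lin_comp; first exact: Hr0lin.
  apply: lin_sub; first by move=> a x y.
  apply: lin_comp; [exact: tlin | exact: cm_lin].
have Hrf i x : rho i (f i x) = x by rewrite /rho Hpf (lin0 (tlin i)) subr0 Hr0f.
have Hdec i y : f i (rho i y) + t i (pi i y) = y.
  have : pi i (y - t i (pi i y)) = 0 by rewrite cmB Hpt subrr.
  move/((Hcok i).2) => [x Hx]; by rewrite /rho -Hx Hr0f Hx subrK.
have rhod i y : rho (i+1) (cd Y i y) = cd X i (rho i y) + rho (i+1) (cd Y i (t i (pi i y))).
  have -> : cd Y i y = cd Y i (f i (rho i y) + t i (pi i y)) by rewrite Hdec.
  by rewrite cdD -cm_comm (linD (rholin _)) Hrf.
have Cin : in_Cn n C.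
  split.
    move=> i; split.
      exact: (fin_gen_retract (cm_lin pi i) (Hpt i) (HY.1 i).1).
    exact: (proj_retract (cm_lin pi i) (tlin i) (Hpt i) (HY.1 i).2).
  move=> i Hi c; by rewrite -(Hpt i c) (HY.2 i Hi (t i c)) cm0.
split=> //; split.
  move=> Cz; apply: Hirr.2.1.
  have Rcomm : forall i y, rho (i+1) (cd Y i y) = cd X i (rho i y).
    by move=> i y; rewrite rhod (Cz _ (pi i y)) (lin0 (tlin i)) cd0 (lin0 (rholin _)) addr0.
  exists (ChainMap rho rholin Rcomm) => i y /=.
  by rewrite -{2}(Hdec i y) (Cz _ (pi i y)) (lin0 (tlin i)) addr0.
move=> C1 C2 j1 j2 q1 q2 H11 H22 H21 H12 Hsum.
have E1 i c : (cmc j1 q1) i ((cmc j1 q1) i c) = (cmc j1 q1) i c by rewrite /= H11.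
have E2 i c : (cmc j2 q2) i ((cmc j2 q2) i c) = (cmc j2 q2) i c by rewrite /= H22.
case: (keyB HY Hirr tlin rholin Hpt Hpf Hrf Hdec E1) => [Z1 | [B [Blin HB]]].
  left=> j x; have := Z1 j (j1 j x); rewrite /= H11 => H0.
  by rewrite -(H11 j x) H0 cm0.
case: (keyB HY Hirr tlin rholin Hpt Hpf Hrf Hdec E2) => [Z2 | [A [Alin HA]]].
  right=> j x; have := Z2 j (j2 j x); rewrite /= H22 => H0.
  by rewrite -(H22 j x) H0 cm0.
exfalso; apply: Hirr.1.
pose k := fun i c => rho (i+1) (cd Y i (t i c)).
have klin i : lin (k i).
  apply: lin_comp; first exact: rholin.
  apply: lin_comp; [exact: cd_lin | exact: tlin].
pose ps := fun i c => A i (j1 i (q1 i c)) + B i (j2 i (q2 i c)).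
have pslin i : lin (ps i).
  rewrite /ps; apply: lin_add; apply: lin_comp; try first [exact: Alin | exact: Blin];
    (apply: lin_comp; exact: cm_lin).
have Hps i c : ps (i+1) (cd C i c) = cd X i (ps i c) - k i c.
  rewrite /ps (cm_comm q1) (cm_comm j1) (cm_comm q2) (cm_comm j2) HA HB /=.
  rewrite H21 H12 !cm0 !(lin0 (tlin _)) cd0 !(lin0 (rholin _)) !addr0.
  have -> : k i c = k i (j1 i (q1 i c)) + k i (j2 i (q2 i c)) by rewrite -(linD (klin i)) Hsum.
  by rewrite cdD opprD addrACA.
pose V := fun i y => rho i y + ps i (pi i y).
have Vlin i : lin (V i).
  apply: lin_add; first exact: rholin.
  apply: lin_comp; [exact: pslin | exact: cm_lin].
have Vcomm i y : V (i+1) (cd Y i y) = cd X i (V i y).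
  rewrite /V rhod (cm_comm pi) Hps cdD.
  by rewrite -addrA (addrC (rho _ _)) subrK.
exists (ChainMap V Vlin Vcomm) => i x /=.
by rewrite /V Hrf Hpf (lin0 (pslin i)) addr0.
Qed.

Theorem theorem2p8 (L : nzRingType) (HL : artin_algebra L) (n : nat)
  (Hn : (2 <= n)%N) (X Y : cplx L) (f : chain_map X Y)
  (HX : in_Cn n X) (HY : in_Cn n Y) (Hirr : irreducible n f)
  (Hind : indecomposable X \/ indecomposable Y) :
  (type_ret f ->
     forall (K : cplx L) (iota : chain_map K X), is_kernel f iota ->
       ~ cplx_zero K /\ indecomposable K /\ in_Cn n K) /\
  (type_sec f ->
     forall (C : cplx L) (pi : chain_map Y C), is_cokernel f pi ->
       indecomposable C /\ in_Cn n C).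
Proof. split; [exact: partA | exact: partB]. Qed.
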